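(* Let $n\ge1$, identify $\mathbb{R}^{n+1}=\mathbb{R}^n\times\mathbb{R}$, and let $K\subset\mathbb{R}^{n+1}$ be a convex compact set. Suppose there exist $x_1\in\mathbb{R}^n$ and real numbers $0<y_1<y_2$ such that $(x_1,y_1)\notin K$ and $(x_1,y_2)\in K$. Then there exist a positive-valued convex (hence continuous) function $f\colon\mathbb{R}^n\to\mathbb{R}$ and a point $x_2\in\mathbb{R}^n$ such that the epigraph $L=\{(x,y)\mid f(x)\le y\}$ is disjoint from $K$ and the vertical line through $x_2$ contains at least two distinct points of the equidistant set $\{K=L\}=\{p\mid d(p,K)=d(p,L)\}$.
   Context: $d(p,A)=\inf\{|p-q|\mid q\in A\}$ (Euclidean distance). *)

(* Defs.v *)
From HB Require Import structures.
From mathcomp Require Import all_boot all_order all_algebra.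
From mathcomp Require Import all_classical all_reals all_analysis.
Set Implicit Arguments. Unset Strict Implicit. Unset Printing Implicit Defensive.
Import Order.TTheory GRing.Theory Num.Theory.
Import numFieldNormedType.Exports.
Local Open Scope classical_set_scope.
Local Open Scope ring_scope.

Definition pt (R : realType) (n : nat) := ('rV[R]_n * R)%type.

Definition edist (R : realType) (n : nat) (p q : pt R n) : R :=
  Num.sqrt (\sum_(i < n) (p.1 0 i - q.1 0 i) ^+ 2 + (p.2 - q.2) ^+ 2).

Definition dist_set (R : realType) (n : nat) (p : pt R n) (A : set (pt R n)) : R :=
  inf [set edist p q | q in A].

Definition equidistant (R : realType) (n : nat) (A B : set (pt R n)) : set (pt R n) :=
  [set p | dist_set p A = dist_set p B].

Definition convex_pt (R : realType) (n : nat) (K : set (pt R n)) : Prop :=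
  forall p q, K p -> K q -> forall t : R, 0 <= t <= 1 ->
    K (t *: p.1 + (1 - t) *: q.1, t * p.2 + (1 - t) * q.2).

Definition convex_fun (R : realType) (n : nat) (f : 'rV[R]_n -> R) : Prop :=
  forall x y : 'rV[R]_n, forall t : R, 0 <= t <= 1 ->
    f (t *: x + (1 - t) *: y) <= t * f x + (1 - t) * f y.

Definition epigraph (R : realType) (n : nat) (f : 'rV[R]_n -> R) : set (pt R n) :=
  [set p | f p.1 <= p.2].

(* Main.v *)
Require Import Defs.
From HB Require Import structures.
From mathcomp Require Import all_boot all_order all_algebra.
From mathcomp Require Import all_classical all_reals all_analysis.
From mathcomp Require Import ring lra.
Import Order.TTheory GRing.Theory Num.Theory.
Import numFieldNormedType.Exports.
Local Open Scope classical_set_scope.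
Local Open Scope ring_scope.
Set Implicit Arguments. Unset Strict Implicit.

Lemma edist_ge0 (R : realType) n (p q : pt R n) : 0 <= Defs.edist p q.
Proof. exact: sqrtr_ge0. Qed.

Lemma edist_self (R : realType) n (p : pt R n) : Defs.edist p p = 0.
Proof.
rewrite /Defs.edist subrr expr0n /= addr0 big1 ?sqrtr0 // => i _.
by rewrite subrr expr0n.
Qed.

Lemma coord_le_edist (R : realType) n (p q : pt R n) i :
  `|q.1 0 i - p.1 0 i| <= Defs.edist p q.
Proof.
rewrite /Defs.edist -sqrtr_sqr ler_wsqrtr // (bigD1 i) //= -sqrrN opprB -addrA lerDl.
by rewrite addr_ge0 ?sqr_ge0 ?sumr_ge0 // => j _; exact: sqr_ge0.
Qed.

Lemma snd_le_edist (R : realType) n (p q : pt R n) :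
  `|q.2 - p.2| <= Defs.edist p q.
Proof.
rewrite /Defs.edist -sqrtr_sqr ler_wsqrtr // -sqrrN opprB lerDr.
by rewrite sumr_ge0 // => j _; exact: sqr_ge0.
Qed.

Lemma edist_lin (R : realType) n (p q : pt R n) (c : 'I_n -> R) (c' : R) :
  \sum_i c i * (q.1 0 i - p.1 0 i) + c' * (q.2 - p.2)
    <= (\sum_i `|c i| + `|c'|) * Defs.edist p q.
Proof.
rewrite mulrDl mulr_suml; apply: lerD.
  apply: ler_sum => i _; apply: le_trans (ler_norm _) _.
  by rewrite normrM ler_wpM2l // coord_le_edist.
apply: le_trans (ler_norm _) _.
by rewrite normrM ler_wpM2l // snd_le_edist.
Qed.

Lemma dist_set_le (R : realType) n (p : pt R n) (A : set (pt R n)) q :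
  A q -> dist_set p A <= Defs.edist p q.
Proof.
move=> Aq; apply: ge_inf; last by exists q.
by exists 0 => _ [z _ <-]; exact: edist_ge0.
Qed.

Lemma dist_set_ge (R : realType) n (p : pt R n) (A : set (pt R n)) m :
  A !=set0 -> (forall q, A q -> m <= Defs.edist p q) -> m <= dist_set p A.
Proof.
move=> [q Aq] H; apply: lb_le_inf; first by exists (Defs.edist p q), q.
by move=> _ [z Az <-]; exact: H.
Qed.

Lemma dist_set_in (R : realType) n (p : pt R n) (A : set (pt R n)) :
  A p -> dist_set p A = 0.
Proof.
move=> Ap; apply/eqP; rewrite eq_le; apply/andP; split.
  by rewrite -(edist_self p) dist_set_le.
by apply: dist_set_ge; [exists p | move=> q _; exact: edist_ge0].
Qed.

Lemma edist_shift (R : realType) n (x : 'rV[R]_n) (y y' : R) (q : pt R n) :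
  Defs.edist (x, y) q <= Defs.edist (x, y') q + `|y - y'|.
Proof.
rewrite /Defs.edist /=.
set S := \sum_(i < n) _.
have S0 : 0 <= S by rewrite sumr_ge0 // => i _; exact: sqr_ge0.
set E := Num.sqrt (S + (y' - q.2) ^+ 2).
have E0 : 0 <= E by exact: sqrtr_ge0.
have hE : `|y' - q.2| <= E.
  by rewrite -sqrtr_sqr ler_wsqrtr // lerDr.
rewrite -[X in _ <= X]ger0_norm ?addr_ge0 // -sqrtr_sqr ler_wsqrtr //.
have -> : y - q.2 = (y' - q.2) + (y - y') by ring.
have h1 : (y' - q.2) * (y - y') <= E * `|y - y'|.
  apply: le_trans (ler_norm _) _; rewrite normrM ler_wpM2r //.
have hE2 : E ^+ 2 = S + (y' - q.2) ^+ 2 by rewrite sqr_sqrtr // addr_ge0 ?sqr_ge0.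
rewrite !sqrrD hE2.
have N : `|y - y'| ^+ 2 = (y - y') ^+ 2 by rewrite real_normK // num_real.
rewrite N; nra.
Qed.

Lemma lip_cont (R : realType) (f : R -> R) :
  (forall a b, `|f a - f b| <= `|a - b|) -> continuous f.
Proof.
move=> H x; apply/cvgrPdist_lt => e e0.
have := (@cvgrPdist_lt _ _ _ _ _ id x).1 (@cvg_id _ (nbhs x)) e e0.
move=> h; near=> t.
have ht : `|x - t| < e by near: t; exact: h.
exact: le_lt_trans (H _ _) ht.
Unshelve. all: by end_near.
Qed.

Lemma dist_set_lip1 (R : realType) n (A : set (pt R n)) x y y' :
  A !=set0 -> dist_set (x, y) A <= dist_set (x, y') A + `|y - y'|.
Proof.
move=> A0; rewrite -lerBlDr; apply: dist_set_ge => // q Aq; rewrite lerBlDr.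
exact: le_trans (dist_set_le (x, y) Aq) (edist_shift x y y' q).
Qed.

Lemma dist_line_cont (R : realType) n (A : set (pt R n)) x :
  A !=set0 -> continuous (fun y => dist_set (x, y) A).
Proof.
move=> A0; apply: lip_cont => a b; rewrite ler_norml; apply/andP; split.
  rewrite lerNl opprB lerBlDr addrC distrC; exact: dist_set_lip1.
by rewrite lerBlDr addrC; exact: dist_set_lip1.
Qed.

Lemma g_cont (R : realType) n (A B : set (pt R n)) x :
  A !=set0 -> B !=set0 ->
  continuous (fun y => dist_set (x, y) A - dist_set (x, y) B).
Proof.
move=> A0 B0 t; apply: cvgB; [exact: dist_line_cont | exact: dist_line_cont].
Qed.

Lemma two_zeros (R : realType) (g : R -> R) a b c :
  continuous g -> a < b -> b < c -> 0 < g a -> g b < 0 -> 0 < g c ->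
  exists z z', z <> z' /\ g z = 0 /\ g z' = 0.
Proof.
move=> gc ab bc ga gb gcc.
have [z zab gz] : exists2 z, z \in `[a, b] & g z = 0.
  apply: IVT; first exact: ltW.
    exact: continuous_subspaceT.
  by rewrite ge_min le_max (ltW gb) (ltW ga) orbT.
have [z' zbc gz'] : exists2 z, z \in `[b, c] & g z = 0.
  apply: IVT; first exact: ltW.
    exact: continuous_subspaceT.
  by rewrite ge_min le_max (ltW gb) (ltW gcc) orbT.
exists z, z'; split=> // ezz.
move: zab zbc; rewrite !in_itv /= => /andP[_ zb] /andP[bz _].
have zbE : z = b by apply/eqP; rewrite eq_le zb ezz.
by move: gb; rewrite -zbE gz ltxx.
Qed.

Lemma cont_snd (R : realType) n : continuous (fun p : 'rV[R]_n * R => p.2).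
Proof. by move=> p; exact: cvg_snd. Qed.

Lemma cont_coord (R : realType) n i :
  continuous (fun p : 'rV[R]_n * R => p.1 0 i).
Proof.
move=> p; apply: (continuous_comp (f := fst) (g := fun M : 'rV[R]_n => M 0 i)).
  exact: cvg_fst.
exact: coord_continuous.
Qed.

Lemma cont_sum (R : realType) n (T : topologicalType) (F : 'I_n -> T -> R) :
  (forall i, continuous (F i)) -> continuous (fun p => \sum_i F i p).
Proof.
move=> Fc p; apply: cvg_big => //.
  by move=> [a b]; apply: cvgD; [exact: cvg_fst | exact: cvg_snd].
move=> i _; exact: Fc.
Qed.

Lemma cont_sq (R : realType) (T : topologicalType) (f : T -> R) :
  continuous f -> continuous (fun p => f p ^+ 2).
Proof.
move=> fc p.
have -> : (fun p => f p ^+ 2) = (fun p => f p * f p).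
  by apply: funext => z; rewrite expr2.
exact: (cvgM (fc p) (fc p)).
Qed.

Lemma separation (R : realType) n (K : set ('rV[R]_n * R))
  (Kconv : convex_pt K) (Kcpt : compact K) (q : pt R n) :
  K !=set0 -> ~ K q ->
  exists (al : 'I_n -> R) (be N : R), 0 < N /\
    forall k, K k -> N <= \sum_i al i * (k.1 0 i - q.1 0 i) + be * (k.2 - q.2).
Proof.
move=> K0 Kq.
pose Phi (p : 'rV[R]_n * R) :=
  \sum_i (p.1 0 i - q.1 0 i) ^+ 2 + (p.2 - q.2) ^+ 2.
have c1 : continuous (fun p : 'rV[R]_n * R => \sum_i (p.1 0 i - q.1 0 i) ^+ 2).
  apply: cont_sum => i; apply: cont_sq => z.
  apply: cvgB; [exact: cont_coord | exact: cvg_cst].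
have c2 : continuous (fun p : 'rV[R]_n * R => (p.2 - q.2) ^+ 2).
  apply: cont_sq => z; apply: cvgB; [exact: cont_snd | exact: cvg_cst].
have Phic : continuous Phi by move=> p; apply: cvgD; [exact: c1 | exact: c2].
have [k0 k0K k0min] := compact_EVT_min K0 Kcpt (continuous_subspaceT Phic).
rewrite inE in k0K.
pose al i := k0.1 0 i - q.1 0 i.
pose be := k0.2 - q.2.
have s0 : 0 <= \sum_i (k0.1 0 i - q.1 0 i) ^+ 2.
  by apply: sumr_ge0 => i _; exact: sqr_ge0.
exists al, be, (Phi k0); split.
  rewrite lt_neqAle addr_ge0 ?sqr_ge0 // andbT; apply/eqP => /esym/eqP.
  rewrite paddr_eq0 ?sqr_ge0 // => /andP[/eqP hs /eqP ht].
  have hi := psumr_eq0P (fun i _ => sqr_ge0 (k0.1 0 i - q.1 0 i)) hs.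
  have e1 : k0.1 = q.1.
    apply/matrixP => i j; rewrite (ord1 i); apply/eqP; rewrite -subr_eq0.
    by rewrite -sqrf_eq0; apply/eqP; exact: hi.
  have e2 : k0.2 = q.2 by apply/eqP; rewrite -subr_eq0 -sqrf_eq0 ht.
  by apply: Kq; rewrite (surjective_pairing q) -e1 -e2 -surjective_pairing.
move=> k Kk.
pose dk i := k.1 0 i - k0.1 0 i.
pose de := k.2 - k0.2.
pose S := \sum_i al i * dk i + be * de.
pose D := \sum_i dk i ^+ 2 + de ^+ 2.
have eq1 : \sum_i al i * (k.1 0 i - q.1 0 i) + be * (k.2 - q.2) = S + Phi k0.
  have -> : \sum_i al i * (k.1 0 i - q.1 0 i) =
      \sum_i al i * dk i + \sum_i (k0.1 0 i - q.1 0 i) ^+ 2.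
    by rewrite -big_split; apply: eq_bigr => i _ /=; rewrite /al /dk; ring.
  rewrite /S /Phi /be /de; ring.
rewrite eq1 lerDr.
rewrite leNgt; apply/negP => Slt.
have D0 : 0 <= D by rewrite addr_ge0 ?sqr_ge0 // sumr_ge0 // => i _; exact: sqr_ge0.
pose t := Num.min 1 (- S / (D + 1)).
have t0 : 0 < t by rewrite lt_min ltr01 divr_gt0 // ?oppr_gt0 // ltr_wpDl.
have t1 : t <= 1 by rewrite ge_min lexx.
have tS : t * (D + 1) <= - S.
  by rewrite -ler_pdivlMr ?ltr_wpDl // ge_min lexx orbT.
have Kt := Kconv k k0 Kk k0K t (introT andP (conj (ltW t0) t1)).
have := k0min _ (mem_set Kt).
have EPhi : Phi (t *: k.1 + (1 - t) *: k0.1, t * k.2 + (1 - t) * k0.2)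
    = Phi k0 + (t * 2) * S + t ^+ 2 * D.
  rewrite /Phi /S /D /=.
  have -> : \sum_i ((t *: k.1 + (1 - t) *: k0.1) 0 i - q.1 0 i) ^+ 2 =
     \sum_i (k0.1 0 i - q.1 0 i) ^+ 2 + t * 2 * \sum_i al i * dk i
       + t ^+ 2 * \sum_i dk i ^+ 2.
    rewrite !mulr_sumr -!big_split; apply: eq_bigr => i _ /=.
    rewrite !mxE /al /dk; ring.
  rewrite /be /de; ring.
rewrite EPhi => hle.
have h1 : t * D < - S by nra.
have h2 : 0 <= t * (2 * S + t * D) by nra.
have : t * (2 * S + t * D) < 0 by rewrite pmulr_rlt0 //; lra.
lra.
Qed.

Unset Implicit Arguments.

Theorem theorem4 (R : realType) (n : nat) (hn : (1 <= n)%N)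
  (K : set ('rV[R]_n * R))
  (Kconv : convex_pt K) (Kcpt : compact K)
  (x1 : 'rV[R]_n) (y1 y2 : R)
  (hy1 : 0 < y1) (hy12 : y1 < y2)
  (hout : ~ K (x1, y1)) (hin : K (x1, y2)) :
  exists (f : 'rV[R]_n -> R) (x2 : 'rV[R]_n),
    (forall x, 0 < f x) /\ convex_fun f /\
    K `&` epigraph f = set0 /\
    exists y y' : R, y <> y' /\
      equidistant K (epigraph f) (x2, y) /\
      equidistant K (epigraph f) (x2, y').
Proof.
have K0 : K !=set0 by exists (x1, y2).
have [kB _ kBmax] := compact_EVT_max K0 Kcpt (continuous_subspaceT (@cont_snd R n)).
set B := kB.2.
have hB : forall k, K k -> k.2 <= B by move=> k Kk; exact: kBmax (mem_set Kk).
have [al [be [N [N0 sep]]]] := separation Kconv Kcpt K0 hout.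
have sep' : forall k, K k ->
    N <= \sum_i al i * (k.1 0 i - x1 0 i) + be * (k.2 - y1) by exact: sep.
have be0 : 0 < be.
  have := sep' _ hin; rewrite /= big1 => [|i _]; last by rewrite subrr mulr0.
  rewrite add0r => h.
  have : 0 < be * (y2 - y1) by exact: lt_le_trans N0 h.
  by rewrite pmulr_lgt0 // subr_gt0.
pose A0 := \sum_i al i ^+ 2.
pose i0 : 'I_n := Ordinal hn.
pose w : 'I_n -> R := if A0 == 0 then (fun i => (i == i0)%:R) else (fun i => - al i).
have W0 : 0 < \sum_i w i ^+ 2.
  rewrite /w; case: eqP => hA.
    rewrite (bigD1 i0) //= expr1n big1 ?addr0 // => j /negbTE ->.
    by rewrite expr0n.
  have : \sum_i (- al i) ^+ 2 = A0 by apply: eq_bigr => i _; rewrite sqrrN.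
  move=> ->; rewrite lt_neqAle eq_sym; apply/andP; split; first exact/eqP.
  by apply: sumr_ge0 => i _; exact: sqr_ge0.
have hwal : forall x : 'rV[R]_n,
    \sum_i w i * x1 0 i <= \sum_i w i * x 0 i ->
    \sum_i al i * x 0 i <= \sum_i al i * x1 0 i.
  move=> x; rewrite /w; case: eqP => hA.
    have al0 := psumr_eq0P (fun i _ => sqr_ge0 (al i)) hA.
    move=> _; rewrite !big1 // => i _; have /eqP := al0 i isT; rewrite sqrf_eq0 => /eqP ->; by rewrite mul0r.
  by rewrite !(eq_bigr _ (fun i _ => mulNr _ _)) !sumrN lerN2.
pose om (x : 'rV[R]_n) := \sum_i w i * x 0 i.
have omc : continuous (fun p : 'rV[R]_n * R => om p.1).
  apply: cont_sum => i z; apply: cvgM; [exact: cvg_cst | exact: cont_coord].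
have [ks ksK' ksmax] := compact_EVT_max K0 Kcpt (continuous_subspaceT omc).
have ksK : K ks by rewrite inE in ksK'.
have hom : forall k, K k -> om k.1 <= om ks.1 by move=> k Kk; exact: ksmax (mem_set Kk).
set x2 := ks.1.
set ys := ks.2.
have halx : \sum_i al i * x2 0 i <= \sum_i al i * x1 0 i by apply: hwal; exact: hom _ hin.
have sumB : forall (c : 'I_n -> R) (u v : 'rV[R]_n),
    \sum_i c i * (u 0 i - v 0 i) = \sum_i c i * u 0 i - \sum_i c i * v 0 i.
  by move=> c u v; rewrite -sumrB; apply: eq_bigr => i _; rewrite mulrBr.
have ys1 : y1 < ys.
  have := sep' _ ksK; rewrite sumB => h.
  have : 0 < be * (ys - y1) by lra.
  by rewrite pmulr_rgt0 // subr_gt0.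
pose C := \sum_i `|al i| + `|be|.
have C0 : 0 < C by rewrite ltr_wpDl ?sumr_ge0 // ?normr_gt0 ?gt_eqF // => i _.
pose LB := N / C.
have LB0 : 0 < LB by exact: divr_gt0.
have dKa : LB <= dist_set (x2, y1) K.
  apply: dist_set_ge => // k Kk; rewrite /LB ler_pdivrMr // mulrC.
  apply: le_trans (edist_lin (x2, y1) k al be); rewrite /= sumB.
  have := sep' _ Kk; rewrite sumB; lra.
have ysB : ys <= B by exact: hB _ ksK.
pose W := \sum_i w i ^+ 2.
pose sW := Num.sqrt W.
have sW0 : 0 <= sW by exact: sqrtr_ge0.
pose rho := LB / (2 * (sW + 1)).
have rho0 : 0 < rho by rewrite divr_gt0 // mulr_gt0 // ltr_wpDl.
have By0 : 0 < B - y1 + 1 by lra.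
pose eta := rho * W / (B - y1 + 1).
have eta0 : 0 < eta by rewrite divr_gt0 // mulr_gt0.
pose d := om x2 + eta * B + eta.
pose f x := Num.max y1 ((d - om x) / eta).
have inL : forall p : 'rV[R]_n * R, epigraph f p -> d <= om p.1 + eta * p.2.
  move=> p; rewrite /epigraph /f /= ge_max => /andP[_].
  by rewrite ler_pdivrMr // => h; lra.
exists f, x2; split.
  by move=> x; rewrite /f lt_max hy1.
split.
  move=> x y t /andP[t0 t1].
  have omlin : om (t *: x + (1 - t) *: y) = t * om x + (1 - t) * om y.
    rewrite /om !mulr_sumr -big_split; apply: eq_bigr => i _ /=.
    rewrite !mxE; ring.
  have fx1 : y1 <= f x by rewrite /f le_max lexx.
  have fx2 : (d - om x) / eta <= f x by rewrite /f le_max lexx orbT.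
  have fy1 : y1 <= f y by rewrite /f le_max lexx.
  have fy2 : (d - om y) / eta <= f y by rewrite /f le_max lexx orbT.
  have t1' : 0 <= 1 - t by rewrite subr_ge0.
  rewrite {1}/f ge_max; apply/andP; split.
    have := ler_wpM2l t0 fx1; have := ler_wpM2l t1' fy1; lra.
  rewrite omlin.
  have -> : (d - (t * om x + (1 - t) * om y)) / eta =
      t * ((d - om x) / eta) + (1 - t) * ((d - om y) / eta).
    by field; rewrite gt_eqF.
  by apply: lerD; apply: ler_wpM2l.
split.
  apply/seteqP; split => // p [Kp /inL Lp].
  have := hom _ Kp; have := hB _ Kp => h1 h2.
  have : eta * p.2 <= eta * B by rewrite ler_wpM2l // ltW.
  rewrite /d -/x2 in Lp; lra.
pose L := epigraph f.
pose Y := Num.max B (f x2) + 1.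
pose wr : 'rV[R]_n := \row_i w i.
pose l := (x2 + rho *: wr, y1).
have hE : eta * (B - y1 + 1) = rho * W by rewrite /eta divfK // gt_eqF.
have lL : L l.
  rewrite /L /epigraph /f /= ge_max lexx /= ler_pdivrMr //.
  have -> : om (x2 + rho *: wr) = om x2 + rho * W.
    rewrite /om /W mulr_sumr -big_split; apply: eq_bigr => i _ /=.
    rewrite !mxE; ring.
  rewrite /d; lra.
have L0 : L !=set0 by exists l.
have dLa : dist_set (x2, y1) L <= rho * sW.
  apply: le_trans (dist_set_le _ lL) _.
  rewrite /Defs.edist /= subrr expr0n addr0.
  rewrite (eq_bigr (fun i => rho ^+ 2 * w i ^+ 2)) => [|i _]; last first.
    rewrite !mxE; ring.
  by rewrite -mulr_sumr sqrtrM ?sqr_ge0 // sqrtr_sqr ger0_norm // ltW.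
have rsW : rho * sW < LB.
  rewrite /rho mulrAC ltr_pdivrMr ?mulr_gt0 ?ltr_wpDl //; nra.
have ga : 0 < dist_set (x2, y1) K - dist_set (x2, y1) L.
  by rewrite subr_gt0; exact: le_lt_trans dLa (lt_le_trans rsW dKa).
have ksE : (x2, ys) = ks by rewrite /x2 /ys -surjective_pairing.
pose Sw := \sum_i `|w i|.
have Sw0 : 0 <= Sw by apply: sumr_ge0 => i _.
have gb : dist_set (x2, ys) K - dist_set (x2, ys) L < 0.
  rewrite ksE dist_set_in // sub0r oppr_lt0.
  apply: (@lt_le_trans _ _ (eta / (Sw + eta))); first by rewrite divr_gt0 // ltr_wpDl.
  apply: dist_set_ge => // l' Ll'.
  rewrite ler_pdivrMr ?ltr_wpDl // mulrC -{2}(ger0_norm (ltW eta0)).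
  apply: le_trans (edist_lin ks l' w eta).
  have Lp := inL _ Ll'.
  rewrite /= sumB; rewrite /d /om in Lp *.
  have : eta * ks.2 <= eta * B by rewrite ler_wpM2l // ltW.
  rewrite -/x2 -/ys in Lp *; lra.
have YB : 1 <= Y - B by rewrite /Y addrAC lerDr subr_ge0 le_max lexx.
have gc : 0 < dist_set (x2, Y) K - dist_set (x2, Y) L.
  rewrite (@dist_set_in _ _ _ L) ?subr0; last first.
    rewrite /L /epigraph /= /Y; have : f x2 <= Num.max B (f x2) by rewrite le_max lexx orbT.
    lra.
  apply: (@lt_le_trans _ _ (Y - B)); first lra.
  apply: dist_set_ge => // k Kk.
  apply: le_trans (snd_le_edist _ _); rewrite /= distrC.
  apply: le_trans (ler_norm _); have := hB _ Kk; lra.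
have ysY : ys < Y by lra.
have [z [z' [zz' [gz gz']]]] := two_zeros (g_cont (x := x2) K0 L0) ys1 ysY ga gb gc.
exists z, z'; split => //; split; rewrite /equidistant /=; apply/eqP;
  rewrite -subr_eq0; apply/eqP; [exact: gz | exact: gz'].
Qed.
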